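(* Let $(G,\cdot)$ be a loop with identity $e$ and $(H,\cdot)$ a non-trivial subloop such that $(xs\cdot z)s=x(sz\cdot s)$ for all $x,z\in G$, $s\in H$. Let $(U,V,W)\in\mathrm{S_{2nd}LAUT}(G_H)\cap\mathrm{S_{2nd}RAUT}(G_H)$, $s_1=eU$ and $s_2=eV$. Then $A=UR_{s_1}^{-1}\in\mathrm{S_{2nd}LPAUT}(G_H)\cap\mathrm{S_{2nd}RPAUT}(G_H)$ with second Smarandache left companion and second Smarandache right companion $c=s_1s_2\cdot s_1$, and $$(U,V,W)=(A,AR_c,AR_c)\,(R_{s_1}^{-1},L_{s_1}R_{s_1},R_{s_1})^{-1}.$$
   Context: Juxtaposition binds more tightly than $\cdot$. Maps are written on the right and composed left to right; $xR_s=x\cdot s$, $xL_s=s\cdot x$; triples are multiplied componentwise. $SYM(G)$ is the group of bijections of $G$; $SSYM(G_H)=\{A\in SYM(G):HA=H\}$. $\mathrm{S_{2nd}RAUT}(G_H)$: triples $(U,V,W)$ with $U,W\in SYM(G)$, $V\in SSYM(G_H)$, $xU\cdot sV=(x\cdot s)W$ for all $x\in G$, $s\in H$. $\mathrm{S_{2nd}LAUT}(G_H)$: triples $(U,V,W)$ with $V,W\in SYM(G)$, $U\in SSYM(G_H)$, $sU\cdot yV=(s\cdot y)W$ for all $y\in G$, $s\in H$. $\mathrm{S_{2nd}RPAUT}(G_H)$ (resp. $\mathrm{S_{2nd}LPAUT}(G_H)$) is the set of $A\in SSYM(G_H)$ for which there is $c\in H$ with $(A,AR_c,AR_c)\in\mathrm{S_{2nd}RAUT}(G_H)$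 (resp. $\in\mathrm{S_{2nd}LAUT}(G_H)$); $c$ is called a second Smarandache right (resp. left) companion of $A$. *)

(* Defs.v *)
From mathcomp Require Import ssreflect ssrfun.
From Stdlib Require Import ClassicalEpsilon.

Set Implicit Arguments.
Unset Strict Implicit.

Record loop (G : Type) := Loop {
  mul : G -> G -> G;
  ldiv : G -> G -> G;
  rdiv : G -> G -> G;
  e : G;
  mul1g : forall x, mul e x = x;
  mulg1 : forall x, mul x e = x;
  mulKl : forall x y, ldiv x (mul x y) = y;
  mulVl : forall x y, mul x (ldiv x y) = y;
  mulKr : forall x y, rdiv (mul y x) x = y;
  mulVr : forall x y, mul (rdiv y x) x = y
}.

Section Defs.
Variables (G : Type) (L : loop G).
Local Notation "x * y" := (mul L x y).

Definition subloop (H : G -> Prop) : Prop :=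
  H (e L) /\
  (forall x y, H x -> H y -> H (x * y)) /\
  (forall x y, H x -> H y -> H (ldiv L x y)) /\
  (forall x y, H x -> H y -> H (rdiv L x y)).

Definition nontrivial (H : G -> Prop) : Prop := exists s, H s /\ s <> e L.

(* Maps are written on the right and composed left to right:
   x (f ;; g) = (x f) g. *)
Definition compr (f g : G -> G) : G -> G := fun x => g (f x).

Definition Rm (s : G) : G -> G := fun x => x * s.
Definition Lm (s : G) : G -> G := fun x => s * x.

(* Inverse of a map (meaningful for bijections). *)
Definition finv (f : G -> G) : G -> G :=
  fun y => epsilon (inhabits (e L)) (fun x => f x = y).

Definition SYM (A : G -> G) : Prop := bijective A.
Definition SSYM (H : G -> Prop) (A : G -> G) : Prop :=
  bijective A /\ (forall y, H y <-> exists x, H x /\ A x = y).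

Definition triple := ((G -> G) * (G -> G) * (G -> G))%type.

Definition tmul (a b : triple) : triple :=
  let: (U1, V1, W1) := a in let: (U2, V2, W2) := b in
  (compr U1 U2, compr V1 V2, compr W1 W2).
Definition tinv (a : triple) : triple :=
  let: (U, V, W) := a in (finv U, finv V, finv W).

Definition S2RAUT (H : G -> Prop) (T : triple) : Prop :=
  let: (U, V, W) := T in
  SYM U /\ SSYM H V /\ SYM W /\
  forall x s, H s -> U x * V s = W (x * s).

Definition S2LAUT (H : G -> Prop) (T : triple) : Prop :=
  let: (U, V, W) := T in
  SSYM H U /\ SYM V /\ SYM W /\
  forall s y, H s -> U s * V y = W (s * y).

Definition S2R_companion (H : G -> Prop) (A : G -> G) (c : G) : Prop :=
  SSYM H A /\ H c /\ S2RAUT H (A, compr A (Rm c), compr A (Rm c)).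
Definition S2L_companion (H : G -> Prop) (A : G -> G) (c : G) : Prop :=
  SSYM H A /\ H c /\ S2LAUT H (A, compr A (Rm c), compr A (Rm c)).

Definition S2RPAUT (H : G -> Prop) (A : G -> G) : Prop :=
  exists c, S2R_companion H A c.
Definition S2LPAUT (H : G -> Prop) (A : G -> G) : Prop :=
  exists c, S2L_companion H A c.

End Defs.

(* Main.v *)
Require Import Defs.
From mathcomp Require Import ssreflect ssrfun ssrbool.
From Stdlib Require Import ClassicalEpsilon FunctionalExtensionality.

Section Aux.
Variables (G : Type) (L : loop G).
Local Notation "x * y" := (mul L x y).

Lemma finv_spec f : bijective f -> forall y, f (finv L f y) = y.
Proof.
move=> [g fg gf] y; rewrite /finv.
apply: (epsilon_spec (inhabits (e L)) (fun x => f x = y)).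
by exists (g y).
Qed.

Lemma finv_eq f x y : bijective f -> f x = y -> finv L f y = x.
Proof.
move=> bf fx; apply: (bij_inj bf); by rewrite finv_spec // fx.
Qed.

Lemma finv_bij f : bijective f -> bijective (finv L f).
Proof.
move=> bf; exists f => x; first by rewrite finv_spec.
exact: finv_eq.
Qed.

Lemma finv_finv f : bijective f -> finv L (finv L f) = f.
Proof.
move=> bf; apply: functional_extensionality => y.
apply: finv_eq; first exact: finv_bij.
exact: finv_eq.
Qed.

Lemma Rm_bij s : bijective (Rm L s).
Proof. exists (fun y => rdiv L y s) => x; by rewrite /Rm ?mulKr ?mulVr. Qed.

Lemma Lm_bij s : bijective (Lm L s).
Proof. exists (fun y => ldiv L s y) => x; by rewrite /Lm ?mulKl ?mulVl. Qed.

Lemma finv_Rm s y : finv L (Rm L s) y = rdiv L y s.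
Proof. apply: finv_eq; [exact: Rm_bij | by rewrite /Rm mulVr]. Qed.

Lemma LR_bij s : bijective (compr (Lm L s) (Rm L s)).
Proof. exact: (bij_comp (Rm_bij s) (Lm_bij s)). Qed.
End Aux.

Theorem theorem3p8 (G : Type) (L : loop G) (H : G -> Prop)
  (HsubL : subloop L H) (Hnt : nontrivial L H)
  (Hid : forall x z s, H s ->
     mul L (mul L (mul L x s) z) s = mul L x (mul L (mul L s z) s))
  (U V W : G -> G)
  (HL : S2LAUT L H (U, V, W)) (HR : S2RAUT L H (U, V, W)) :
  let s1 := U (e L) in
  let s2 := V (e L) in
  let A := compr U (finv L (Rm L s1)) in
  let c := mul L (mul L s1 s2) s1 in
  [/\ S2LPAUT L H A, S2RPAUT L H A,
      S2L_companion L H A c, S2R_companion L H A c &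
      (U, V, W) =
        tmul (A, compr A (Rm L c), compr A (Rm L c))
             (tinv L (finv L (Rm L s1), compr (Lm L s1) (Rm L s1), Rm L s1))].
Proof.
case: HL => [[Ubij UH] [Vbij [Wbij HLeq]]].
case: HR => [_ [[_ VH] [_ HReq]]].
case: HsubL => [He [Hmul [Hld Hrd]]].
move=> s1 s2 A c.
have Hs1 : H s1 by apply: (UH s1).2; exists (e L).
have Hs2 : H s2 by apply: (VH s2).2; exists (e L).
have WU : forall x, W x = mul L (U x) s2.
  by move=> x; have := HReq x (e L) He; rewrite mulg1.
have WV : forall y, W y = mul L s1 (V y).
  by move=> y; have := HLeq (e L) y He; rewrite mul1g.
have Ax : forall x, A x = rdiv L (U x) s1 by move=> x; rewrite /A /compr finv_Rm.
have AU : forall x, U x = mul L (A x) s1 by move=> x; rewrite Ax mulVr.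
have key : forall x, mul L (W x) s1 = mul L (A x) c.
  by move=> x; rewrite WU AU /c Hid.
have key2 : forall x y, mul L (mul L (U x) (V y)) s1 = mul L (A x) (mul L (W y) s1).
  by move=> x y; rewrite AU Hid // -WV.
have Abij : bijective A.
  have := bij_comp (@finv_bij _ L _ (@Rm_bij _ L s1)) Ubij; by [].
have ASSYM : SSYM H A.
  split=> // y; split.
    move=> Hy; have : H (mul L y s1) by apply: (Hmul).
    case/UH => x [Hx Ux]; exists x; split=> //; by rewrite Ax Ux mulKr.
  case=> x [Hx <-]; rewrite Ax; apply: (Hrd) => //; apply: (UH _).2; by exists x.
have Hc : H c by apply: (Hmul) => //; apply: (Hmul).
have ARbij : bijective (compr A (Rm L c)) := bij_comp (@Rm_bij _ L c) Abij.
have Lc : S2L_companion L H A c.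
  split=> //; split=> //; split=> //; split=> //; split=> // s y Hs.
  rewrite /compr /Rm -!key -HLeq //; by rewrite key2.
have ARH : SSYM H (compr A (Rm L c)).
  split=> // y; split.
    move=> Hy; have : H (rdiv L y c) by apply: (Hrd).
    case/(ASSYM.2) => x [Hx Axe]; exists x; split=> //.
    by rewrite /compr /Rm Axe mulVr.
  case=> x [Hx <-]; rewrite /compr /Rm; apply: (Hmul) => //.
  apply: (ASSYM.2 _).2; by exists x.
have Rc : S2R_companion L H A c.
  split=> //; split=> //; split=> //; split=> //; split=> // x s Hs.
  rewrite /compr /Rm -!key -HReq //; by rewrite key2.
split; [by exists c | by exists c | done | done |].
rewrite /tmul /tinv /=.
congr (_, _, _); apply: functional_extensionality => x; rewrite /compr.
- rewrite finv_finv; last exact: Rm_bij.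
  by rewrite /Rm -AU.
- symmetry; apply: finv_eq; first exact: LR_bij.
  by rewrite /compr /Lm /Rm -WV key.
- by rewrite finv_Rm /Rm -key mulKr.
Qed.
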